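(* For every natural number $\alpha<\omega$, \[ f_{\omega^{\omega^\alpha}}\in d_{1/2}^{\omega^{1+\alpha}}\Big(B_{\ell_1([0,\omega^{\omega^\alpha}])}\Big). \]
   Context: Ordinal arithmetic throughout. For an ordinal $\gamma$, $[0,\gamma]$ has the order topology and $\ell_1([0,\gamma])$ is identified with $C([0,\gamma])^*$ (weak$^*$-topology accordingly). For $\beta\le\gamma$, $f_\beta\in\ell_1([0,\gamma])$ is the indicator of $\{\beta\}$. For a weak$^*$-compact $K$ in a dual $X^*$: $H(x,t)=\{x^*: x^*(x)>t\}$; a weak$^*$-slice of $K$ is a nonempty $H(x,t)\cap K$; $d_\varepsilon K$ is $K$ minus the union of all weak$^*$-slices of $K$ of norm diameter $<\varepsilon$; $d_\varepsilon^0K=K$, $d_\varepsilon^{\beta+1}K=d_\varepsilon(d_\varepsilon^\beta K)$, $d_\varepsilon^\beta K=\bigcap_{\mu<\beta}d_\varepsilon^\mu K$ for limit $\beta$. *)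

(* Defs.v *)
From Stdlib Require Import Reals List ClassicalEpsilon.
Open Scope R_scope.

(* ---------- Ordinals below omega^omega (Cantor normal form) ----------
   a : Exp represents  ... + omega^k * a k + ... + omega^0 * a 0
   (only finitely supported a are meaningful). *)
Definition Exp := nat -> nat.
Definition exp_fin (a : Exp) : Prop := exists N, forall k, (N <= k)%nat -> a k = 0%nat.
Definition exp_lt (a b : Exp) : Prop :=
  exists k, (a k < b k)%nat /\ forall j, (k < j)%nat -> a j = b j.
Definition exp_zero : Exp := fun _ => 0%nat.
Definition exp_succ (a : Exp) : Exp :=
  fun k => match k with O => S (a O) | _ => a k end.
Definition exp_is_limit (a : Exp) : Prop := a O = 0%nat /\ a <> exp_zero.
Definition exp_omega_pow (n : nat) : Exp := fun k => if Nat.eqb k n then 1%nat else 0%nat.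

(* ---------- Ordinals below omega^(omega^omega) (Cantor normal form) ----------
   p : Pt represents  sum over exponents e (descending) of omega^e * p e. *)
Definition Pt := Exp -> nat.
Definition pt_fin (p : Pt) : Prop :=
  (exists s : list Exp, forall e, ~ In e s -> p e = 0%nat) /\
  (forall e, p e <> 0%nat -> exp_fin e).
Definition pt_lt (p q : Pt) : Prop :=
  exists e, exp_fin e /\ (p e < q e)%nat /\
    forall e', exp_fin e' -> exp_lt e e' -> p e' = q e'.
Definition pt_le (p q : Pt) : Prop := pt_lt p q \/ p = q.
Definition pt_omega_pow (e0 : Exp) : Pt :=
  fun e => if excluded_middle_informative (e = e0) then 1%nat else 0%nat.
Definition gam (a : nat) : Pt := pt_omega_pow (exp_omega_pow a).
Definition dom (g : Pt) (p : Pt) : Prop := pt_fin p /\ pt_le p g.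

Fixpoint lsum (g : Pt -> R) (s : list Pt) : R :=
  match s with nil => 0 | p :: s' => g p + lsum g s' end.
(* unconditional sum over the index set D *)
Definition has_sum (D : Pt -> Prop) (g : Pt -> R) (L : R) : Prop :=
  forall eps, 0 < eps -> exists F0 : list Pt, (forall p, In p F0 -> D p) /\
    forall F, NoDup F -> (forall p, In p F -> D p) -> incl F0 F ->
      Rabs (lsum g F - L) < eps.
Definition l1 (D : Pt -> Prop) (mu : Pt -> R) : Prop :=
  (forall p, ~ D p -> mu p = 0) /\ exists L, has_sum D (fun p => Rabs (mu p)) L.
Definition ball (D : Pt -> Prop) (mu : Pt -> R) : Prop :=
  l1 D mu /\ exists L, has_sum D (fun p => Rabs (mu p)) L /\ L <= 1.

(* order topology on D *)
Definition in_interval (lo hi : option Pt) (p : Pt) : Prop :=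
  match lo with None => True | Some a => pt_lt a p end /\
  match hi with None => True | Some b => pt_lt p b end.
Definition cont_at (D : Pt -> Prop) (x : Pt -> R) (b : Pt) : Prop :=
  forall eps, 0 < eps -> exists lo hi,
    (forall a, lo = Some a -> D a) /\ (forall c, hi = Some c -> D c) /\
    in_interval lo hi b /\
    forall p, D p -> in_interval lo hi p -> Rabs (x p - x b) < eps.
Definition continuous_on (D : Pt -> Prop) (x : Pt -> R) : Prop :=
  forall b, D b -> cont_at D x b.

Definition pairing (D : Pt -> Prop) (mu x : Pt -> R) (L : R) : Prop :=
  has_sum D (fun p => mu p * x p) L.

Definition wslice (D : Pt -> Prop) (K : (Pt -> R) -> Prop) (x : Pt -> R) (t : R)
  : (Pt -> R) -> Prop :=
  fun mu => K mu /\ exists L, pairing D mu x L /\ t < L.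
Definition diam_lt (D : Pt -> Prop) (S : (Pt -> R) -> Prop) (eps : R) : Prop :=
  exists delta, delta < eps /\ forall mu nu, S mu -> S nu ->
    forall L, has_sum D (fun p => Rabs (mu p - nu p)) L -> L <= delta.
Definition deriv (D : Pt -> Prop) (eps : R) (K : (Pt -> R) -> Prop) : (Pt -> R) -> Prop :=
  fun mu => K mu /\
    ~ (exists x t, continuous_on D x /\ (exists nu, wslice D K x t nu) /\
         diam_lt D (wslice D K x t) eps /\ wslice D K x t mu).

Definition deriv_family (D : Pt -> Prop) (eps : R) (K : (Pt -> R) -> Prop)
  (F : Exp -> (Pt -> R) -> Prop) : Prop :=
  (forall mu, F exp_zero mu <-> K mu) /\
  (forall b, exp_fin b -> forall mu, F (exp_succ b) mu <-> deriv D eps (F b) mu) /\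
  (forall b, exp_fin b -> exp_is_limit b ->
     forall mu, F b mu <-> (forall c, exp_fin c -> exp_lt c b -> F c mu)).
Definition deriv_iter (D : Pt -> Prop) (eps : R) (K : (Pt -> R) -> Prop) (b : Exp)
  : (Pt -> R) -> Prop :=
  fun mu => forall F, deriv_family D eps K F -> F b mu.

Definition fpt (b : Pt) : Pt -> R :=
  fun p => if excluded_middle_informative (p = b) then 1 else 0.

(* Main.v *)
Require Import Defs.
From Stdlib Require Import Reals.
From Stdlib Require Import List Lra Lia Classical ClassicalEpsilon FunctionalExtensionality FinFun.
Open Scope R_scope.

Lemma exp_lt_trans a b c : exp_lt a b -> exp_lt b c -> exp_lt a c.
Proof.
  intros [k1 [H1 A1]] [k2 [H2 A2]].
  destruct (Nat.lt_trichotomy k1 k2) as [Hk|[Hk|Hk]].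
  - exists k2. split.
    + rewrite A1 by exact Hk. exact H2.
    + intros j Hj. rewrite A1 by lia. apply A2; lia.
  - subst k2. exists k1. split; [lia|]. intros j Hj. rewrite A1, A2 by lia. reflexivity.
  - exists k1. split.
    + rewrite <- (A2 k1) by exact Hk. exact H1.
    + intros j Hj. rewrite A1, A2 by lia. reflexivity.
Qed.

Lemma exp_lt_irrefl a : ~ exp_lt a a.
Proof. intros [k [H _]]. lia. Qed.

Lemma exp_trich_N N : forall a b : Exp, (forall k, (N <= k)%nat -> a k = b k) ->
  exp_lt a b \/ a = b \/ exp_lt b a.
Proof.
  induction N as [|N IH]; intros a b H.
  - right; left. apply functional_extensionality. intro k. apply H; lia.
  - destruct (Nat.lt_trichotomy (a N) (b N)) as [h|[h|h]].
    + left. exists N. split; [exact h|]. intros j Hj. apply H; lia.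
    + apply IH. intros k Hk. destruct (Nat.eq_dec k N); [subst; exact h|]. apply H; lia.
    + right; right. exists N. split; [exact h|]. intros j Hj. symmetry; apply H; lia.
Qed.

Lemma exp_trich a b : exp_fin a -> exp_fin b -> exp_lt a b \/ a = b \/ exp_lt b a.
Proof.
  intros [N1 H1] [N2 H2]. apply (exp_trich_N (N1 + N2)).
  intros k Hk. rewrite H1, H2 by lia. reflexivity.
Qed.

Definition exp_le (a b : Exp) : Prop := exp_lt a b \/ a = b.

Lemma exp_lt_le_trans a b c : exp_lt a b -> exp_le b c -> exp_lt a c.
Proof. intros H [H'|H']; [eapply exp_lt_trans; eauto| subst; auto]. Qed.
Lemma exp_le_lt_trans a b c : exp_le a b -> exp_lt b c -> exp_lt a c.
Proof. intros [H|H] H'; [eapply exp_lt_trans; eauto| subst; auto]. Qed.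

Definition Rw (c xi : Exp) : Prop := exp_fin c /\ exp_fin xi /\ exp_lt c xi.

Lemma bound_lt N c xi : (forall k, (N <= k)%nat -> xi k = 0%nat) -> exp_lt c xi ->
  forall k, (N <= k)%nat -> c k = 0%nat.
Proof.
  intros H [k0 [H1 H2]] k Hk.
  assert (k0 < N)%nat. { destruct (Nat.lt_ge_cases k0 N); auto. rewrite H in H1 by lia. lia. }
  rewrite H2 by lia. apply H; lia.
Qed.

Definition low (N : nat) (xi : Exp) : Exp := fun k => if Nat.eqb k N then 0%nat else xi k.

Lemma Acc_N N : forall xi, (forall k, (N <= k)%nat -> xi k = 0%nat) -> Acc Rw xi.
Proof.
  induction N as [|N IHN]; intros xi Hxi.
  - constructor. intros c [_ [_ [k [Hk _]]]]. rewrite Hxi in Hk by lia. lia.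
  - assert (main : forall a xi, (forall k, (S N <= k)%nat -> xi k = 0%nat) -> xi N = a -> Acc Rw xi).
    { intro a. induction a as [a IHa] using (well_founded_induction Wf_nat.lt_wf).
      assert (inner : forall eta, Acc Rw eta -> forall xi, (forall k, (S N <= k)%nat -> xi k = 0%nat) ->
                 xi N = a -> low N xi = eta -> Acc Rw xi).
      { intros eta Hacc. induction Hacc as [eta _ IHeta]. intros xi0 Hb HN Heta.
        constructor. intros c Hc. destruct Hc as [Hcf [Hxf Hlt]].
        pose proof (bound_lt _ _ _ Hb Hlt) as Hcb.
        destruct Hlt as [k [Hk Hag]].
        assert (k <= N)%nat. { destruct (Nat.le_gt_cases k N); auto. rewrite Hb in Hk by lia. lia. }
        destruct (Nat.eq_dec k N) as [->|Hne].
        - apply (IHa (c N)); auto. lia.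
        - apply (IHeta (low N c)); auto.
          + subst eta. split; [|split].
            * exists N. intros j Hj. unfold low. destruct (Nat.eqb_spec j N); auto. apply Hcb; lia.
            * exists N. intros j Hj. unfold low. destruct (Nat.eqb_spec j N); auto. apply Hb; lia.
            * exists k. unfold low. destruct (Nat.eqb_spec k N); [lia|]. split; auto.
              intros j Hj. destruct (Nat.eqb_spec j N); auto.
          + rewrite Hag by lia. exact HN. }
      intros xi0 Hb HN. apply (inner (low N xi0)); auto.
      apply IHN. intros k Hk. unfold low. destruct (Nat.eqb_spec k N); auto. apply Hb; lia. }
    apply (main (xi N)); auto.
Qed.

Lemma Rw_wf : well_founded Rw.
Proof.
  intro xi. destruct (classic (exp_fin xi)) as [[N H]|H].
  - exact (Acc_N N xi H).
  - constructor. intros c [_ [Hf _]]. contradiction.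
Qed.


Lemma pt_lt_trans p q r : pt_lt p q -> pt_lt q r -> pt_lt p r.
Proof.
  intros [e1 [F1 [H1 A1]]] [e2 [F2 [H2 A2]]].
  destruct (exp_trich e1 e2 F1 F2) as [h|[h|h]].
  - exists e2. split; [auto|split].
    + rewrite A1 by auto. exact H2.
    + intros e' Fe' He'. rewrite A1, A2; auto. eapply exp_lt_trans; eauto.
  - subst e2. exists e1. split; [auto|split]; [lia|].
    intros e' Fe' He'. rewrite A1, A2; auto.
  - exists e1. split; [auto|split].
    + rewrite <- (A2 e1) by auto. exact H1.
    + intros e' Fe' He'. rewrite A1, A2; auto. eapply exp_lt_trans; eauto.
Qed.

Lemma pt_lt_irrefl p : ~ pt_lt p p.
Proof. intros [e [_ [H _]]]. lia. Qed.

Lemma pt_lt_le_trans p q r : pt_lt p q -> pt_le q r -> pt_lt p r.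
Proof. intros H [H'|H']; [eapply pt_lt_trans; eauto|subst; auto]. Qed.

Definition divis (e : Exp) (b : Pt) : Prop :=
  (exists e0, b e0 <> 0%nat) /\ forall e', b e' <> 0%nat -> exp_le e e'.

Lemma max_exp (b : Pt) (s : list Exp) : (forall e, b e <> 0%nat -> exp_fin e) ->
  (exists e0, In e0 s /\ b e0 <> 0%nat) ->
  exists m, b m <> 0%nat /\ forall e, In e s -> b e <> 0%nat -> exp_le e m.
Proof.
  intros Hf. induction s as [|x s IH]; intros [e0 [Hin Hnz]].
  - destruct Hin.
  - destruct (Nat.eq_dec (b x) 0) as [Hx|Hx].
    + destruct IH as [m [Hm Hm2]].
      { exists e0. destruct Hin as [->|Hin]; [contradiction|auto]. }
      exists m. split; auto. intros e [->|He] Hne; [contradiction|auto].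
    + destruct (classic (exists e1, In e1 s /\ b e1 <> 0%nat)) as [Hex|Hno].
      * destruct (IH Hex) as [m [Hm Hm2]].
        destruct (exp_trich x m (Hf _ Hx) (Hf _ Hm)) as [h|[h|h]].
        -- exists m. split; auto. intros e [->|He] Hne; [left; auto|auto].
        -- subst. exists m. split; auto. intros e [->|He] Hne; [right; auto|auto].
        -- exists x. split; auto. intros e [->|He] Hne; [right; auto|].
           left. eapply exp_le_lt_trans; eauto.
      * exists x. split; auto. intros e [->|He] Hne; [right; auto|].
        exfalso; apply Hno; eauto.
Qed.

Definition zpt : Pt := fun _ => 0%nat.

Lemma zpt_fin : pt_fin zpt.
Proof. split. - exists nil. auto. - intros e H. exfalso; apply H; reflexivity. Qed.

Lemma zero_lt b : pt_fin b -> (exists e0, b e0 <> 0%nat) -> pt_lt zpt b.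
Proof.
  intros [[s Hs] Hf] [e0 He0].
  destruct (max_exp b s Hf) as [m [Hm Hm2]].
  { exists e0. split; auto. destruct (classic (In e0 s)); auto. exfalso; apply He0; auto. }
  exists m. split; [auto|split]; [unfold zpt; lia|].
  intros e' Fe' He'. unfold zpt. destruct (Nat.eq_dec (b e') 0) as [h|h]; auto.
  exfalso. assert (In e' s). { destruct (classic (In e' s)); auto. exfalso; apply h; auto. }
  pose proof (Hm2 e' H h) as [h2|h2].
  - apply (exp_lt_irrefl m). eapply exp_lt_trans; eauto.
  - subst. apply (exp_lt_irrefl m); auto.
Qed.

Definition Pj (a : Pt) (e' : Exp) (j : nat) : Pt := fun d =>
  if excluded_middle_informative (exp_lt d e') then 0%nat
  else if excluded_middle_informative (d = e') then (a d + S j)%nat else a d.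

Lemma Pj_e' a e' j : Pj a e' j e' = (a e' + S j)%nat.
Proof.
  unfold Pj. destruct (excluded_middle_informative (exp_lt e' e')) as [h|_].
  - exfalso; exact (exp_lt_irrefl _ h).
  - destruct (excluded_middle_informative (e' = e')); congruence.
Qed.

Lemma Pj_above a e' j d : exp_lt e' d -> Pj a e' j d = a d.
Proof.
  intro H. unfold Pj. destruct (excluded_middle_informative (exp_lt d e')) as [h|_].
  - exfalso. apply (exp_lt_irrefl d). eapply exp_lt_trans; eauto.
  - destruct (excluded_middle_informative (d = e')) as [h|_]; auto.
    subst. exfalso; exact (exp_lt_irrefl _ H).
Qed.

Lemma Pj_fin a e' j : pt_fin a -> exp_fin e' -> pt_fin (Pj a e' j).
Proof.
  intros [[s Hs] Hf] Fe'. split.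
  - exists (e' :: s). intros d Hd. unfold Pj.
    destruct (excluded_middle_informative (exp_lt d e')); auto.
    destruct (excluded_middle_informative (d = e')) as [h|h].
    + exfalso; apply Hd; left; auto.
    + apply Hs. intro; apply Hd; right; auto.
  - intros d Hd. unfold Pj in Hd.
    destruct (excluded_middle_informative (exp_lt d e')); [lia|].
    destruct (excluded_middle_informative (d = e')) as [h|h]; [subst; auto|auto].
Qed.

Lemma Pj_divis a e' j : pt_fin a -> exp_fin e' -> divis e' (Pj a e' j).
Proof.
  intros Ha Fe'. split.
  - exists e'. rewrite Pj_e'. lia.
  - intros d Hd. assert (Fd : exp_fin d) by (apply (proj2 (Pj_fin a e' j Ha Fe')); auto).
    unfold Pj in Hd. destruct (excluded_middle_informative (exp_lt d e')); [lia|].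
    destruct (exp_trich e' d Fe' Fd) as [h|[h|h]]; [left; auto|right; auto|contradiction].
Qed.

Lemma Pj_gt a e' j : exp_fin e' -> pt_lt a (Pj a e' j).
Proof.
  intros Fe'. exists e'. split; [auto|split].
  - rewrite Pj_e'. lia.
  - intros d Fd Hd. rewrite Pj_above; auto.
Qed.

Lemma Pj_lt a e e' j b : exp_lt e' e -> divis e b -> pt_lt a b -> pt_lt (Pj a e' j) b.
Proof.
  intros He [_ Hd] [es [Fes [H1 H2]]].
  assert (Hl : exp_lt e' es).
  { assert (b es <> 0%nat) by lia. eapply exp_lt_le_trans; eauto. }
  exists es. split; [auto|split].
  - rewrite Pj_above; auto.
  - intros d Fd Hd'. rewrite Pj_above; [auto|]. eapply exp_lt_trans; eauto.
Qed.

Lemma Pj_inj a e' : Injective (Pj a e').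
Proof.
  intros i j H. assert (Pj a e' i e' = Pj a e' j e') by (rewrite H; auto).
  rewrite !Pj_e' in H0. lia.
Qed.

Lemma points g b e e' (lo hi : option Pt) K :
  dom g b -> divis e b -> exp_fin e' -> exp_lt e' e ->
  (forall a, lo = Some a -> dom g a) -> in_interval lo hi b ->
  exists L, NoDup L /\ length L = K /\
    forall p, In p L -> dom g p /\ divis e' p /\ in_interval lo hi p /\ pt_lt p b.
Proof.
  intros [Hbf Hbg] Hdiv Fe' He Hlo [Hi1 Hi2].
  set (a := match lo with Some a => a | None => zpt end).
  assert (Haf : pt_fin a).
  { unfold a. destruct lo as [a0|]; [apply (Hlo a0 eq_refl)|apply zpt_fin]. }
  assert (Hab : pt_lt a b).
  { unfold a. destruct lo as [a0|]; [exact Hi1|apply zero_lt; auto; apply Hdiv]. }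
  exists (map (Pj a e') (seq 0 K)). split; [|split].
  - apply Injective_map_NoDup; [apply Pj_inj|apply seq_NoDup].
  - rewrite length_map, length_seq. auto.
  - intros p Hp. apply in_map_iff in Hp. destruct Hp as [j [<- _]].
    assert (Hlt : pt_lt (Pj a e' j) b) by (eapply Pj_lt; eauto).
    split; [split|split; [|split; [split|]]]; auto.
    + apply Pj_fin; auto.
    + destruct Hbg as [h|h]; [left; eapply pt_lt_trans; eauto|subst; left; auto].
    + apply Pj_divis; auto.
    + unfold a in *. destruct lo; auto. apply Pj_gt; auto.
    + destruct hi; auto. eapply pt_lt_trans; eauto.
Qed.


Definition pdec (x y : Pt) : {x = y} + {x <> y} := excluded_middle_informative (x = y).

Lemma lsum_app g A0 B0 : lsum g (A0 ++ B0) = lsum g A0 + lsum g B0.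
Proof. induction A0; simpl; [lra|rewrite IHA0; lra]. Qed.

Lemma lsum_ext_in g h S : (forall p, In p S -> g p = h p) -> lsum g S = lsum h S.
Proof.
  induction S as [|x S IH]; intros H; simpl; auto.
  rewrite H by (left; auto). rewrite IH; auto. intros p Hp; apply H; right; auto.
Qed.

Lemma lsum_const c S : lsum (fun _ => c) S = INR (length S) * c.
Proof. induction S; simpl length; [simpl; lra|rewrite S_INR; simpl; rewrite IHS; lra]. Qed.

Lemma lsum_scale c g S : lsum (fun p => c * g p) S = c * lsum g S.
Proof. induction S; simpl; [lra|rewrite IHS; lra]. Qed.

Lemma lsum_remove g a F : In a F -> NoDup F -> lsum g F = g a + lsum g (remove pdec a F).
Proof.
  induction F as [|b F IH]; intros Hin Hnd; [destruct Hin|].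
  inversion Hnd; subst. simpl. destruct (pdec a b) as [->|Hne].
  - rewrite notin_remove by auto. lra.
  - simpl. rewrite IH; [lra| |auto]. destruct Hin as [->|]; [congruence|auto].
Qed.

Lemma NoDup_remove' a F : NoDup F -> NoDup (remove pdec a F).
Proof.
  induction F as [|b F IH]; intros Hnd; simpl; [constructor|].
  inversion Hnd; subst. destruct (pdec a b); auto.
  constructor; auto. intro H. apply in_remove in H. tauto.
Qed.

Lemma lsum_zero g S : (forall p, In p S -> g p = 0) -> lsum g S = 0.
Proof.
  induction S as [|x S IH]; intros H; simpl; auto.
  rewrite H by (left; auto). rewrite IH; [lra|]. intros; apply H; right; auto.
Qed.

Lemma lsum_sub g S : forall F, NoDup S -> NoDup F -> incl S F ->
  (forall p, In p F -> ~ In p S -> g p = 0) -> lsum g F = lsum g S.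
Proof.
  induction S as [|a S IH]; intros F HS HF Hinc Hz.
  - simpl. apply lsum_zero. intros p Hp. apply Hz; auto.
  - inversion HS; subst. rewrite (lsum_remove g a F) by (auto; apply Hinc; left; auto).
    simpl. rewrite (IH (remove pdec a F)); auto.
    + apply NoDup_remove'; auto.
    + intros p Hp. apply in_in_remove; [intro; subst; contradiction|apply Hinc; right; auto].
    + intros p Hp Hn. apply in_remove in Hp. apply Hz; [tauto|]. intros [->|]; tauto.
Qed.

Lemma has_sum_fin (D : Pt -> Prop) g S : (forall p, In p S -> D p) -> NoDup S ->
  (forall p, ~ In p S -> g p = 0) -> has_sum D g (lsum g S).
Proof.
  intros HD HN Hz eps Heps. exists S. split; auto.
  intros F HF HFD Hinc. rewrite (lsum_sub g S F); auto.
  unfold Rminus. rewrite Rplus_opp_r, Rabs_R0. auto.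
Qed.

Lemma has_sum_unique D g L1 L2 : has_sum D g L1 -> has_sum D g L2 -> L1 = L2.
Proof.
  intros H1 H2. destruct (Req_dec L1 L2) as [|Hne]; auto. exfalso.
  set (eps := Rabs (L1 - L2) / 2).
  assert (Heps : 0 < eps) by (unfold eps; assert (L1 - L2 <> 0) by lra; pose proof (Rabs_pos_lt _ H); lra).
  destruct (H1 eps Heps) as [F1 [D1 G1]]. destruct (H2 eps Heps) as [F2 [D2 G2]].
  set (F := nodup pdec (F1 ++ F2)).
  assert (HFD : forall p, In p F -> D p).
  { intros p Hp. apply nodup_In in Hp. apply in_app_or in Hp. destruct Hp; auto. }
  assert (I1 : incl F1 F). { intros p Hp. apply nodup_In. apply in_or_app; auto. }
  assert (I2 : incl F2 F). { intros p Hp. apply nodup_In. apply in_or_app; auto. }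
  pose proof (G1 F (NoDup_nodup _ _) HFD I1) as A1.
  pose proof (G2 F (NoDup_nodup _ _) HFD I2) as A2.
  unfold eps in *. apply Rabs_def2 in A1. apply Rabs_def2 in A2.
  unfold Rabs in *. destruct (Rcase_abs (L1 - L2)); lra.
Qed.

Definition u (L : list Pt) : Pt -> R := fun p =>
  if excluded_middle_informative (In p L) then / INR (length L) else 0.

Lemma u_in L p : In p L -> u L p = / INR (length L).
Proof. intro H. unfold u. destruct (excluded_middle_informative (In p L)); tauto. Qed.
Lemma u_out L p : ~ In p L -> u L p = 0.
Proof. intro H. unfold u. destruct (excluded_middle_informative (In p L)); tauto. Qed.

Lemma len_pos (L : list Pt) : L <> nil -> 0 < INR (length L).
Proof. intro H. destruct L; [congruence|]. simpl length. rewrite S_INR. pose proof (pos_INR (length L)). lra. Qed.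

Lemma u_ball D L : (forall p, In p L -> D p) -> NoDup L -> L <> nil -> ball D (u L).
Proof.
  intros HD HN Hne.
  assert (Hs : has_sum D (fun p => Rabs (u L p)) (lsum (fun p => Rabs (u L p)) L)).
  { apply has_sum_fin; auto. intros p Hp. rewrite u_out; auto. apply Rabs_R0. }
  assert (Hv : lsum (fun p => Rabs (u L p)) L = 1).
  { rewrite (lsum_ext_in _ (fun _ => / INR (length L))).
    - rewrite lsum_const. field. apply Rgt_not_eq, len_pos; auto.
    - intros p Hp. rewrite u_in; auto. apply Rabs_right. left. apply Rinv_0_lt_compat, len_pos; auto. }
  split; [split|].
  - intros p Hp. apply u_out. intro; apply Hp; auto.
  - eauto.
  - exists 1. rewrite <- Hv. split; auto. lra.
Qed.

Definition val (x : Pt -> R) (L : list Pt) : R := lsum (fun q => u L q * x q) L.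

Lemma u_pair D L x : (forall p, In p L -> D p) -> NoDup L -> pairing D (u L) x (val x L).
Proof.
  intros HD HN. apply has_sum_fin; auto. intros p Hp. rewrite u_out; auto. lra.
Qed.

Lemma val_half x A0 B0 : NoDup (A0 ++ B0) -> length A0 = length B0 -> A0 <> nil ->
  val x (A0 ++ B0) = / 2 * (val x A0 + val x B0).
Proof.
  intros HN Hl Hne. assert (HB : B0 <> nil) by (destruct B0; destruct A0; simpl in *; congruence).
  pose proof (len_pos _ Hne). pose proof (len_pos _ HB).
  unfold val. rewrite lsum_app.
  rewrite (lsum_ext_in _ (fun q => / 2 * (u A0 q * x q)) A0).
  rewrite (lsum_ext_in _ (fun q => / 2 * (u B0 q * x q)) B0).
  - rewrite !lsum_scale. lra.
  - intros p Hp. rewrite !u_in; auto. 2: apply in_or_app; auto.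
    rewrite length_app, plus_INR, Hl. field. lra.
  - intros p Hp. rewrite !u_in; auto. 2: apply in_or_app; auto.
    rewrite length_app, plus_INR, Hl. field. lra.
Qed.

Lemma nodup_disj (A0 B0 : list Pt) p : NoDup (A0 ++ B0) -> In p A0 -> ~ In p B0.
Proof.
  induction A0 as [|a A0 IH]; intros HN Hp; [destruct Hp|].
  simpl in HN. inversion HN; subst. destruct Hp as [->|Hp].
  - intro; apply H1; apply in_or_app; auto.
  - auto.
Qed.

Lemma dist_half D A0 B0 : (forall p, In p (A0 ++ B0) -> D p) -> NoDup (A0 ++ B0) ->
  length A0 = length B0 -> A0 <> nil ->
  has_sum D (fun p => Rabs (u (A0 ++ B0) p - u A0 p)) 1.
Proof.
  intros HD HN Hl Hne. assert (HB : B0 <> nil) by (destruct B0; destruct A0; simpl in *; congruence).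
  pose proof (len_pos _ Hne) as P1.
  replace 1 with (lsum (fun p => Rabs (u (A0 ++ B0) p - u A0 p)) (A0 ++ B0)).
  - apply has_sum_fin; auto. intros p Hp. rewrite !u_out; auto.
    + unfold Rminus; rewrite Rplus_opp_r; apply Rabs_R0.
    + intro; apply Hp; apply in_or_app; auto.
  - rewrite lsum_app.
    rewrite (lsum_ext_in _ (fun _ => / (2 * INR (length A0))) A0).
    rewrite (lsum_ext_in _ (fun _ => / (2 * INR (length A0))) B0).
    + rewrite !lsum_const. rewrite <- Hl. field. lra.
    + intros p Hp. rewrite u_in by (apply in_or_app; auto).
      rewrite u_out by (intro h; exact (nodup_disj _ _ _ HN h Hp)).
      rewrite length_app, plus_INR, <- Hl. rewrite Rminus_0_r.
      replace (INR (length A0) + INR (length A0)) with (2 * INR (length A0)) by ring.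
      apply Rabs_right. left. apply Rinv_0_lt_compat. lra.
    + intros p Hp. rewrite !u_in by (auto; apply in_or_app; auto).
      rewrite length_app, plus_INR, <- Hl.
      replace (/ (INR (length A0) + INR (length A0)) - / INR (length A0)) with (- / (2 * INR (length A0))) by (field; lra).
      rewrite Rabs_Ropp. apply Rabs_right. left. apply Rinv_0_lt_compat. lra.
Qed.

Lemma dist_point D b L : D b -> (forall p, In p L -> D p) -> NoDup L -> ~ In b L -> L <> nil ->
  has_sum D (fun p => Rabs (u L p - u (b :: nil) p)) 2.
Proof.
  intros Hb HD HN Hbn Hne. pose proof (len_pos _ Hne) as P1.
  replace 2 with (lsum (fun p => Rabs (u L p - u (b :: nil) p)) (b :: L)).
  - apply has_sum_fin.
    + intros p [->|Hp]; auto.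
    + constructor; auto.
    + intros p Hp. rewrite !u_out.
      * unfold Rminus; rewrite Rplus_opp_r; apply Rabs_R0.
      * intros [->|[]]; apply Hp; left; auto.
      * intro; apply Hp; right; auto.
  - simpl lsum. rewrite u_out by auto. rewrite u_in by (left; auto).
    rewrite (lsum_ext_in _ (fun _ => / INR (length L)) L).
    + rewrite lsum_const. simpl length. simpl INR. rewrite Rinv_1.
      replace (Rabs (0 - 1)) with 1 by (rewrite Rabs_left; lra). field. lra.
    + intros p Hp. rewrite u_in by auto. rewrite u_out.
      * rewrite Rminus_0_r. apply Rabs_right. left. apply Rinv_0_lt_compat. lra.
      * intros [->|[]]. contradiction.
Qed.


Definition shift (e : Exp) (n : nat) : Exp := fun k => match k with O => n | S k' => e k' end.

Lemma le_succ_S z e n : exp_le (exp_succ z) (shift e (S n)) -> exp_le z (shift e n).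
Proof.
  intros [[k [H1 H2]]|H].
  - left. destruct k as [|k].
    + exists 0%nat. simpl in *. split; [lia|]. intros j Hj. specialize (H2 j Hj).
      destruct j; [lia|]. exact H2.
    + exists (S k). split; [exact H1|]. intros j Hj. specialize (H2 j Hj).
      destruct j; [lia|]. exact H2.
  - right. apply functional_extensionality. intro k.
    assert (h := f_equal (fun f => f k) H). simpl in h. destruct k; simpl in *; [lia|auto].
Qed.

Lemma le_succ_0 z e : exp_le (exp_succ z) (shift e 0) -> exp_lt (fun k => z (S k)) e.
Proof.
  intros [[k [H1 H2]]|H].
  - destruct k as [|k]; [simpl in H1; lia|].
    exists k. split; [exact H1|]. intros j Hj. apply (H2 (S j)). lia.
  - exfalso. assert (h := f_equal (fun f => f 0%nat) H). simpl in h. lia.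
Qed.

Lemma lt_succ z : exp_lt z (exp_succ z).
Proof. exists 0%nat. simpl. split; [lia|]. intros j Hj. destruct j; [lia|auto]. Qed.

Lemma fin_shift_down z : exp_fin z -> exp_fin (fun k => z (S k)).
Proof. intros [N H]. exists N. intros k Hk. apply H. lia. Qed.

Lemma slice_far D K x t mu nu d : wslice D K x t mu -> wslice D K x t nu ->
  has_sum D (fun p => Rabs (mu p - nu p)) d -> 1/2 <= d ->
  diam_lt D (wslice D K x t) (1/2) -> False.
Proof.
  intros H1 H2 H3 H4 [delta [Hd H5]]. specialize (H5 mu nu H1 H2 d H3). lra.
Qed.

Definition T (g : Pt) (F : Exp -> (Pt -> R) -> Prop) (xi : Exp) : Prop := forall e n L, exp_fin e -> NoDup L -> length L = (2 ^ n)%nat ->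
  (forall b, In b L -> dom g b /\ divis e b) -> exp_le xi (shift e n) -> F xi (u L).

Lemma nonnil (L : list Pt) n : length L = (2 ^ n)%nat -> L <> nil.
Proof. intros H ->. simpl in H. pose proof (Nat.pow_nonzero 2 n). lia. Qed.

Lemma main_T (g : Pt) (F : Exp -> (Pt -> R) -> Prop) (HF : deriv_family (dom g) (1/2) (ball (dom g)) F) :
  forall xi, exp_fin xi -> T g F xi.
Proof.
  destruct HF as [H0 [HS HL]].
  intro xi. induction xi as [xi IH] using (well_founded_induction Rw_wf).
  intros Hfin e n L Hfe HN Hlen HLb Hle.
  pose proof (nonnil L n Hlen) as Hne.
  assert (HD : forall p, In p L -> dom g p) by (intros p Hp; apply HLb; auto).
  destruct (classic (xi = exp_zero)) as [Hz|Hnz].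
  { subst. apply H0. apply u_ball; auto. }
  destruct (xi 0%nat) as [|m] eqn:Hx0.
  -
    apply (HL xi Hfin (conj Hx0 Hnz)). intros c Hc Hlt.
    apply (IH c (conj Hc (conj Hfin Hlt)) Hc e n L); auto.
    left. eapply exp_lt_le_trans; eauto.
  - set (z := fun k => match k with O => m | S k' => xi (S k') end).
    assert (Hxz : xi = exp_succ z).
    { apply functional_extensionality. intro k. destruct k; simpl; auto. }
    assert (Hzf : exp_fin z).
    { destruct Hfin as [N HN']. exists (S N). intros k Hk. destruct k; [lia|]. simpl. apply HN'. lia. }
    assert (Rz : Rw z xi) by (split; [auto|split; [auto|rewrite Hxz; apply lt_succ]]).
    rewrite Hxz in Hle |- *.
    apply (HS z Hzf). split.
    + apply (IH z Rz Hzf e n L); auto. left. eapply exp_lt_le_trans; [apply lt_succ|eauto].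
    + intros [x [t [Hcont [_ [Hdiam Hsl]]]]].
      destruct Hsl as [_ [Lv [Hpair Ht]]].
      destruct n as [|n'].
      *
        destruct L as [|b [|b' L']]; simpl in Hlen; try lia.
        destruct (HLb b (or_introl eq_refl)) as [Hbd Hbdiv].
        assert (Hv : Lv = x b).
        { rewrite (has_sum_unique _ _ _ _ Hpair (u_pair (dom g) (b :: nil) x ltac:(intros p [->|[]]; auto) HN)).
          unfold val. simpl. rewrite u_in by (left; auto). simpl. lra. }
        destruct (Hcont b Hbd (Lv - t) ltac:(lra)) as [lo [hi [Hlo [Hhi [Hin Hx]]]]].
        set (e' := fun k => z (S k)).
        assert (He' : exp_lt e' e) by (apply le_succ_0; auto).
        destruct (points g b e e' lo hi (2 ^ (z 0%nat))%nat Hbd Hbdiv (fin_shift_down z Hzf) He' Hlo Hin)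
          as [L2 [HN2 [Hl2 HP2]]].
        assert (HD2 : forall p, In p L2 -> dom g p) by (intros p Hp; apply HP2; auto).
        pose proof (nonnil L2 _ Hl2) as Hne2.
        assert (FL2 : F z (u L2)).
        { apply (IH z Rz Hzf e' (z 0%nat) L2 (fin_shift_down z Hzf) HN2 Hl2).
          - intros b0 Hb0. split; apply HP2; auto.
          - right. apply functional_extensionality. intro k. destruct k; reflexivity. }
        assert (Hval : t < val x L2).
        { unfold val. assert (Hp : forall q, In q L2 -> t < x q).
          { intros q Hq. destruct (HP2 q Hq) as [Hqd [_ [Hqi _]]]. specialize (Hx q Hqd Hqi).
            apply Rabs_def2 in Hx. lra. }
          rewrite (lsum_ext_in _ (fun q => / INR (length L2) * x q)) by (intros q Hq; rewrite u_in; auto).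
          rewrite lsum_scale. pose proof (len_pos _ Hne2) as P.
          assert (Hs : forall S, incl S L2 -> S <> nil -> INR (length S) * t < lsum x S).
          { induction S as [|q S IHS]; intros Hi Hn; [congruence|].
            simpl length. rewrite S_INR. simpl lsum.
            assert (t < x q) by (apply Hp, Hi; left; auto).
            destruct S as [|q' S]. { simpl. lra. }
            assert (INR (length (q' :: S)) * t < lsum x (q' :: S)).
            { apply IHS; [intros y Hy; apply Hi; right; auto|congruence]. }
            lra. }
          specialize (Hs L2 (incl_refl _) Hne2).
          apply (Rmult_lt_compat_l (/ INR (length L2))) in Hs; [|apply Rinv_0_lt_compat; lra].
          rewrite <- Rmult_assoc, Rinv_l in Hs by lra. lra. }
        assert (Hbn : ~ In b L2).
        { intro h. destruct (HP2 b h) as [_ [_ [_ h2]]]. exact (pt_lt_irrefl _ h2). }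
        apply (slice_far (dom g) (F z) x t (u L2) (u (b :: nil)) 2).
        -- split; auto. exists (val x L2). split; auto. apply u_pair; auto.
        -- split. { apply (IH z Rz Hzf e 0%nat (b :: nil)); auto. left. eapply exp_lt_le_trans; [apply lt_succ|eauto]. } exists Lv. auto.
        -- apply dist_point; auto.
        -- lra.
        -- auto.
      *
        set (N := (2 ^ n')%nat).
        set (L1 := firstn N L). set (L2 := skipn N L).
        assert (HLs : L = L1 ++ L2) by (symmetry; apply firstn_skipn).
        assert (Hl1 : length L1 = N) by (unfold L1; rewrite length_firstn; simpl in Hlen; unfold N; lia).
        assert (Hl2 : length L2 = N) by (unfold L2; rewrite length_skipn; simpl in Hlen; unfold N; lia).
        assert (HN12 : NoDup (L1 ++ L2)) by (rewrite <- HLs; auto).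
        assert (Hle' : exp_le z (shift e n')) by (apply le_succ_S; auto).
        assert (Hne1 : L1 <> nil) by (apply (nonnil L1 n'); auto).
        assert (Hne2 : L2 <> nil) by (apply (nonnil L2 n'); auto).
        assert (FL1 : F z (u L1)).
        { apply (IH z Rz Hzf e n' L1); auto. - eapply NoDup_app_remove_r; eauto.
          - intros b Hb. apply HLb. rewrite HLs. apply in_or_app; auto. }
        assert (FL2 : F z (u L2)).
        { apply (IH z Rz Hzf e n' L2); auto. - eapply NoDup_app_remove_l; eauto.
          - intros b Hb. apply HLb. rewrite HLs. apply in_or_app; auto. }
        assert (FL : F z (u L)).
        { apply (IH z Rz Hzf e (S n') L); auto. left. eapply exp_lt_le_trans; [apply lt_succ|eauto]. }
        assert (HD12 : forall p, In p (L1 ++ L2) -> dom g p) by (rewrite <- HLs; auto).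
        assert (Hv : Lv = / 2 * (val x L1 + val x L2)).
        { rewrite (has_sum_unique _ _ _ _ Hpair (u_pair (dom g) L x HD HN)).
          rewrite HLs. apply val_half; auto. lia. }
        assert (HsL : wslice (dom g) (F z) x t (u L)) by (split; auto; exists Lv; auto).
        destruct (Rlt_or_le t (val x L1)) as [h1|h1].
        -- apply (slice_far (dom g) (F z) x t (u L) (u L1) 1); auto.
           ++ split; auto. exists (val x L1). split; auto. apply u_pair; auto.
              ** intros p Hp; apply HD12, in_or_app; auto.
              ** eapply NoDup_app_remove_r; eauto.
           ++ rewrite HLs. apply dist_half; auto. lia.
           ++ lra.
        -- assert (h2 : t < val x L2) by lra.
           assert (Hperm : u L = u (L2 ++ L1)).
           { apply functional_extensionality. intro p. unfold u.
             rewrite HLs, !length_app. rewrite Nat.add_comm.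
             destruct (excluded_middle_informative (In p (L1 ++ L2))) as [a1|a1];
             destruct (excluded_middle_informative (In p (L2 ++ L1))) as [a2|a2]; auto;
             exfalso; [apply a2|apply a1]; apply in_app_or in a1 + apply in_app_or in a2;
             apply in_or_app; tauto. }
           assert (HN21 : NoDup (L2 ++ L1)).
           { apply NoDup_app; [eapply NoDup_app_remove_l; eauto|eapply NoDup_app_remove_r; eauto|].
             intros a Ha Hb. exact (nodup_disj _ _ _ HN12 Hb Ha). }
           apply (slice_far (dom g) (F z) x t (u L) (u L2) 1); auto.
           ++ split; auto. exists (val x L2). split; auto. apply u_pair; auto.
              ** intros p Hp; apply HD12, in_or_app; auto.
              ** eapply NoDup_app_remove_l; eauto.
           ++ rewrite Hperm. apply dist_half; auto.
              ** intros p Hp. apply HD12. apply in_app_or in Hp; apply in_or_app; tauto.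
              ** lia.
           ++ lra.
Qed.

Theorem mainTheorem10 : forall alpha : nat,
  deriv_iter (dom (gam alpha)) (1/2) (ball (dom (gam alpha)))
    (exp_omega_pow (1 + alpha)) (fpt (gam alpha)).
Proof.
  intros alpha F HF.
  assert (Hfin : forall a, exp_fin (exp_omega_pow a)).
  { intro a. exists (S a). intros k Hk. unfold exp_omega_pow.
    destruct (Nat.eqb_spec k a); [lia|auto]. }
  assert (Hg : forall e, gam alpha e <> 0%nat -> e = exp_omega_pow alpha).
  { intros e He. unfold gam, pt_omega_pow in He.
    destruct (excluded_middle_informative (e = exp_omega_pow alpha)); auto. lia. }
  assert (Hg1 : gam alpha (exp_omega_pow alpha) = 1%nat).
  { unfold gam, pt_omega_pow. destruct (excluded_middle_informative _); congruence. }
  assert (Hdom : dom (gam alpha) (gam alpha)).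
  { split; [split|right; auto].
    - exists (exp_omega_pow alpha :: nil). intros e He.
      destruct (Nat.eq_dec (gam alpha e) 0); auto. exfalso. apply He. left. symmetry; auto.
    - intros e He. rewrite (Hg e He). auto. }
  replace (fpt (gam alpha)) with (u (gam alpha :: nil)).
  - apply (main_T (gam alpha) F HF _ (Hfin _) (exp_omega_pow alpha) 0%nat); auto.
    + constructor; [intros []|constructor].
    + intros b [<-|[]]. split; auto. split.
      * exists (exp_omega_pow alpha). rewrite Hg1. lia.
      * intros e' He'. right. symmetry. auto.
    + right. apply functional_extensionality. intro k. unfold shift, exp_omega_pow.
      destruct k; reflexivity.
  - apply functional_extensionality. intro p. unfold u, fpt.
    destruct (excluded_middle_informative (In p (gam alpha :: nil))) as [h|h];
    destruct (excluded_middle_informative (p = gam alpha)) as [h'|h']; simpl; try lra.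
    + exfalso. destruct h as [h|[]]. apply h'. symmetry. exact h.
    + exfalso. apply h. left; auto.
Qed.
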